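(* Let $\mathcal{V}_t$ be a variety of $\Omega$-algebras satisfying $t(x,y)=x$ for some $t\in T_2$, and let $\mathcal{W}$ be any variety of $\Omega$-algebras. Then the relative Mal'tsev product $\mathcal{V}_t\circ_{\mathcal{W}}\mathcal{S}$ is a variety.
   Context: $\Omega$-algebras are of a plural similarity type (no nullary operation symbols, at least one operation symbol of arity $\ge2$). $T_2$ is the set of binary $\Omega$-terms in $x_1,x_2$ in which both variables occur. An identity is regular if the same variables occur on both sides; $\mathcal{S}$ is the variety of $\Omega$-algebras satisfying all regular identities. The relative Mal'tsev product $\mathcal{V}\circ_{\mathcal{W}}\mathcal{S}$ is the class of all $A\in\mathcal{W}$ having a congruence $\theta$ with $A/\theta\in\mathcal{S}$ and every $\theta$-class (a subalgebra) in $\mathcal{V}$; equivalently $\mathcal{W}\cap(\mathcal{V}\circ\mathcal{S})$. *)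

(* Defs.v *)
From mathcomp Require Import all_boot.
From Stdlib Require Import ClassicalEpsilon.

Set Implicit Arguments.
Unset Strict Implicit.
Unset Printing Implicit Defensive.

Section UniversalAlgebra.

Variables (Op : Type) (ar : Op -> nat).

Record algebra := Algebra {
  carrier :> Type;
  op : forall o : Op, ('I_(ar o) -> carrier) -> carrier }.

(* Omega-terms in the variables x_0, x_1, x_2, ... (Var n is x_(n+1)). *)
Inductive term : Type :=
  | Var : nat -> term
  | App : forall o : Op, ('I_(ar o) -> term) -> term.

Fixpoint eval (A : algebra) (v : nat -> A) (t : term) : A :=
  match t with
  | Var n => v n
  | App o args => @op A o (fun i => @eval A v (args i))
  end.

Fixpoint occurs (n : nat) (t : term) : Prop :=
  match t with
  | Var m => n = m
  | App o args => exists i, occurs n (args i)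
  end.

Definition satisfies (A : algebra) (s t : term) : Prop :=
  forall v : nat -> A, eval v s = eval v t.

Definition algclass := algebra -> Prop.

Definition Mod (Sigma : term -> term -> Prop) : algclass :=
  fun A => forall s t, Sigma s t -> satisfies A s t.

Definition is_variety (K : algclass) : Prop :=
  exists Sigma : term -> term -> Prop, forall A, K A <-> Mod Sigma A.

Definition regular (s t : term) : Prop := forall n, occurs n s <-> occurs n t.

Definition Svar : algclass := Mod regular.

(* T_2: binary terms in x_1 = Var 0, x_2 = Var 1 in which both occur *)
Definition in_T2 (t : term) : Prop :=
  (forall n, occurs n t -> n = 0 \/ n = 1) /\ occurs 0 t /\ occurs 1 t.

Definition congruence (A : algebra) (th : A -> A -> Prop) : Prop :=
  [/\ (forall x, th x x),
      (forall x y, th x y -> th y x),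
      (forall x y z, th x y -> th y z -> th x z) &
      (forall o (a b : 'I_(ar o) -> A),
          (forall i, th (a i) (b i)) -> th (@op A o a) (@op A o b))].

Definition qcarrier (A : algebra) (th : A -> A -> Prop) :=
  {X : A -> Prop | exists a, X = th a}.

Definition qrep (A : algebra) (th : A -> A -> Prop) (X : qcarrier th) : A :=
  proj1_sig (constructive_indefinite_description _ (proj2_sig X)).

Definition qop (A : algebra) (th : A -> A -> Prop) (o : Op)
    (args : 'I_(ar o) -> qcarrier th) : qcarrier th :=
  exist _ (th (@op A o (fun i => qrep (args i))))
          (ex_intro _ (@op A o (fun i => qrep (args i))) erefl).

Definition quotient (A : algebra) (th : A -> A -> Prop) : algebra :=
  @Algebra (qcarrier th) (@qop A th).

Definition closed (A : algebra) (B : A -> Prop) : Prop :=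
  forall o (a : 'I_(ar o) -> A), (forall i, B (a i)) -> B (@op A o a).

Definition subalg (A : algebra) (B : A -> Prop) (H : closed B) : algebra :=
  @Algebra {x : A | B x}
    (fun o args => exist _ (@op A o (fun i => proj1_sig (args i)))
                           (H o _ (fun i => proj2_sig (args i)))).

Definition malcev_rel (V W : algclass) : algclass :=
  fun A => W A /\
    exists th : A -> A -> Prop,
      [/\ congruence th, Svar (quotient th) &
          forall a : A, exists H : closed (th a), V (subalg H)].

End UniversalAlgebra.

Arguments Var {Op ar}.

(* Main.v *)
Require Import Defs.
From mathcomp Require Import all_boot.
From Stdlib Require Import ClassicalEpsilon FunctionalExtensionality PropExtensionality ProofIrrelevance.

Set Implicit Arguments.
Unset Strict Implicit.

Section Aux.
Variables (Op : Type) (ar : Op -> nat).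

Fixpoint subst (sg : nat -> term ar) (r : term ar) : term ar :=
  match r with
  | Var n => sg n
  | App o args => @App _ ar o (fun i => subst sg (args i))
  end.

Lemma eval_subst (A : algebra ar) (v : nat -> A) sg r :
  eval v (subst sg r) = eval (fun n => eval v (sg n)) r.
Proof.
elim: r => [n|o args IH] //=.
f_equal; apply: functional_extensionality => i; exact: IH.
Qed.

Lemma occurs_subst m sg (r : term ar) :
  occurs m (subst sg r) <-> exists k, occurs k r /\ occurs m (sg k).
Proof.
elim: r => [n|o args IH] /=.
  split; [move=> h; exists n; by split | by move=> [k [-> h]]].
split.
  move=> [i /IH [k [h1 h2]]]; exists k; split => //; by exists i.
move=> [k [[i h1] h2]]; exists i; apply/IH; by exists k.
Qed.

Lemma eval_occ (A : algebra ar) (v w : nat -> A) (r : term ar) :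
  (forall n, occurs n r -> v n = w n) -> eval v r = eval w r.
Proof.
elim: r => [n|o args IH] /= h; first exact: h.
f_equal; apply: functional_extensionality => i; apply: IH => n hn.
apply: h; by exists i.
Qed.

Lemma qrepP (A : algebra ar) (th : A -> A -> Prop) (X : qcarrier th) :
  proj1_sig X = th (qrep X).
Proof.
rewrite /qrep; by case: (constructive_indefinite_description _ _).
Qed.

Lemma cong_eq (A : algebra ar) (th : A -> A -> Prop) x y :
  congruence th -> th x y -> th x = th y.
Proof.
case=> rf sy tr _ h; apply: functional_extensionality => z.
apply: propositional_extensionality; split => hz; eauto.
Qed.

Lemma cong_eval (A : algebra ar) (th : A -> A -> Prop) (v w : nat -> A) r :
  congruence th -> (forall n, th (v n) (w n)) -> th (eval v r) (eval w r).
Proof.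
move=> hc h; elim: r => [n|o args IH] //=.
case: hc => _ _ _ c; exact: c.
Qed.

Lemma eval_quot (A : algebra ar) (th : A -> A -> Prop) (V : nat -> quotient th) r :
  congruence th ->
  proj1_sig (eval V r) = th (eval (fun n => qrep (V n)) r).
Proof.
move=> hc; elim: r => [n|o args IH] /=; first exact: qrepP.
apply: cong_eq => //.
case: (hc) => rf sy tr c; apply: c => i.
have e := IH i; rewrite qrepP in e.
have : th (qrep (eval V (args i))) (qrep (eval V (args i))) by apply: rf.
by rewrite {2}e.
Qed.

Lemma eval_sub (A : algebra ar) (B : A -> Prop) (H : Defs.closed B)
   (w : nat -> subalg H) r :
  proj1_sig (eval w r) = eval (fun n => proj1_sig (w n)) r.
Proof.
elim: r => [n|o args IH] //=.
f_equal; apply: functional_extensionality => i; exact: IH.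
Qed.

Lemma sig_eq (T : Type) (P : T -> Prop) (x y : {z : T | P z}) :
  proj1_sig x = proj1_sig y -> x = y.
Proof.
case: x => x px; case: y => y py /= e; subst y; f_equal; apply: proof_irrelevance.
Qed.

End Aux.

Section Main.
Variables (Op : Type) (ar : Op -> nat).
Variable (t : term ar).
Hypothesis ht : in_T2 t.

Definition T (A : algebra ar) (x y : A) : A :=
  eval (fun n => if n == 0 then x else y) t.
Definition Tm (r1 r2 : term ar) : term ar :=
  subst (fun n => if n == 0 then r1 else r2) t.

Lemma evalTm (A : algebra ar) (v : nat -> A) r1 r2 :
  eval v (Tm r1 r2) = T (eval v r1) (eval v r2).
Proof.
rewrite /Tm eval_subst /T; f_equal; apply: functional_extensionality => n.
by case: (n == 0).
Qed.

Lemma occTm m r1 r2 : occurs m (Tm r1 r2) <-> occurs m r1 \/ occurs m r2.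
Proof.
rewrite /Tm occurs_subst; case: ht => h1 [h0 h1'].
split.
  move=> [k [hk hm]]; case: (h1 k hk) => ek; subst k; [by left | by right].
case=> h; [exists 0 | exists 1]; by split.
Qed.

Lemma reg_sym (r1 r2 : term ar) : regular r1 r2 -> regular r2 r1.
Proof. move=> h n; split; apply h. Qed.

Section BSide.
Variables (B : algebra ar) (phi : B -> B -> Prop).
Hypothesis hc : congruence phi.

Lemma phi_refl x : phi x x. Proof. by case: hc. Qed.
Lemma phi_sym x y : phi x y -> phi y x. Proof. case: hc => _ s _ _; exact: s. Qed.
Lemma phi_trans x y z : phi x y -> phi y z -> phi x z.
Proof. case: hc => _ _ tr _; exact: tr. Qed.

Lemma B2 : Svar (quotient phi) -> forall r1 r2, regular r1 r2 ->
  forall v, phi (eval v r1) (eval v r2).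
Proof.
move=> hS r1 r2 hr v.
pose V := fun n => (exist (fun X => exists a, X = phi a) (phi (v n)) (ex_intro _ (v n) erefl)
                    : quotient phi).
have e := hS r1 r2 hr V.
have e' := f_equal (@proj1_sig _ _) e.
rewrite !eval_quot // in e'.
have hq : forall n, phi (v n) (qrep (V n)).
  move=> n; have := qrepP (V n); rewrite /= => E.
  have := phi_refl (qrep (V n)); rewrite -E; exact.
pose qv := fun n => qrep (V n).
have m : phi (eval qv r1) (eval qv r2).
  have := phi_refl (eval qv r2); rewrite -e'; exact.
apply: phi_trans (cong_eval _ hc hq) _.
apply: phi_trans m _.
apply: cong_eval hc _ => n; apply: phi_sym; exact: hq.
Qed.

Variable Vt : algclass ar.
Hypothesis hcl : forall a : B, exists H : Defs.closed (phi a), Vt (subalg H).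

Lemma B3 : (forall A, Vt A -> satisfies A t (Var 0)) ->
  forall e1 e2, phi e2 e1 -> T e1 e2 = e1.
Proof.
move=> HVt e1 e2 p.
have [H hV] := hcl e2.
pose w := fun n => if n == 0 then (@exist B (phi e2) e1 p : subalg H)
                   else (@exist B (phi e2) e2 (phi_refl e2) : subalg H).
have s := HVt _ hV w.
have := f_equal (@proj1_sig _ _) s; rewrite !eval_sub /= => E.
apply: eq_trans _ E.
rewrite /T; f_equal; apply: functional_extensionality => n; rewrite /w.
by case: (n == 0).
Qed.

Lemma BV (SigV : term ar -> term ar -> Prop) :
  (forall A, Vt A <-> Mod SigV A) ->
  forall s u, SigV s u -> forall (q : B) v, (forall n, phi q (v n)) -> eval v s = eval v u.
Proof.
move=> hSig s u hsu q v hv.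
have [H hV] := hcl q.
pose w := fun n => (@exist B (phi q) (v n) (hv n) : subalg H).
have := (proj1 (hSig _) hV) s u hsu w.
move/(f_equal (@proj1_sig _ _)); rewrite !eval_sub /=; exact.
Qed.

End BSide.

Variables (Vt W : algclass ar) (SigV : term ar -> term ar -> Prop).
Hypothesis hSigV : forall A, Vt A <-> Mod SigV A.
Hypothesis HVt : forall A, Vt A -> satisfies A t (Var 0).
Hypothesis Hnonullary : forall o : Op, 0 < ar o.

Definition K := malcev_rel Vt W.
Definition Sigma (s u : term ar) : Prop := forall B, K B -> satisfies B s u.

Lemma I1 r1 r2 : regular r1 r2 -> Sigma (Tm r1 r2) r1.
Proof.
move=> hr B [_ [phi [hc hS hcl]]] v; rewrite evalTm.
apply: (B3 hc hcl HVt); apply: phi_sym => //; exact: B2.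
Qed.

Definition sgQ (s u : term ar) n := Tm (Var n) (Tm s u).

Lemma I2 s u : SigV s u -> Sigma (subst (sgQ s u) s) (subst (sgQ s u) u).
Proof.
move=> hsu B [_ [phi [hc hS hcl]]] v; rewrite !eval_subst.
pose q := eval v (Tm s u).
have E : (fun n => eval v (sgQ s u n)) = (fun n => T (v n) q).
  apply: functional_extensionality => n; by rewrite /sgQ evalTm.
rewrite E.
pose w := fun n => if excluded_middle_informative (occurs n s \/ occurs n u)
                   then T (v n) q else q.
have ag : forall r, (forall n, occurs n r -> occurs n s \/ occurs n u) ->
   eval (fun n => T (v n) q) r = eval w r.
  move=> r hr; apply: eval_occ => n hn; rewrite /w.
  case: excluded_middle_informative => // hno; exfalso; exact: hno (hr n hn).
rewrite (ag s (fun n h => or_introl h)) (ag u (fun n h => or_intror h)).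
have hw : forall n, phi q (w n).
  move=> n; rewrite /w.
case: excluded_middle_informative => hn; last exact: phi_refl.
apply: phi_sym => //.
have hr : regular (Tm (Var n) (Tm s u)) (Tm s u).
  move=> m; rewrite occTm /=; split; last by right.
  case=> // ->; apply/occTm; exact: hn.
have := B2 hc hS hr v; by rewrite evalTm.
exact: (BV hcl hSigV hsu hw).
Qed.

Section ASide.
Variable A : algebra ar.
Hypothesis hA : Mod Sigma A.

Definition th (x y : A) := T x y = x /\ T y x = y.

Lemma A1 r1 r2 : regular r1 r2 -> forall v, th (eval v r1) (eval v r2).
Proof.
move=> hr v; split.
  by have := hA (I1 hr) v; rewrite evalTm.
by have := hA (I1 (reg_sym hr)) v; rewrite evalTm.
Qed.

Lemma th_refl x : th x x.
Proof. exact: (A1 (r1 := Var 0) (r2 := Var 0) (fun n => conj id id) (fun _ => x)). Qed.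

Lemma th_trans x y z : th x y -> th y z -> th x z.
Proof.
move=> [h1 h2] [h3 h4].
pose v := fun n => if n == 0 then x else if n == 1 then y else z.
have hr : regular (Tm (Var 0) (Tm (Var 1) (Var 2))) (Tm (Var 2) (Tm (Var 1) (Var 0))).
  move=> m; rewrite !occTm /=; tauto.
have := A1 hr v; rewrite !evalTm /=.
by rewrite h3 h1 h2 h4.
Qed.

Lemma th_compat o (a b : 'I_(ar o) -> A) :
  (forall i, th (a i) (b i)) -> th (op a) (op b).
Proof.
move=> h.
pose v := fun n : nat => if insub n is Some i then a i
          else if insub (n - ar o) is Some j then b j else op a.
have hr : regular (@App _ ar o (fun i => Tm (Var i) (Var (ar o + i))))
                  (@App _ ar o (fun i => Tm (Var (ar o + i)) (Var i))).
  move=> m /=; split; move=> [i hi]; exists i; move: hi; rewrite !occTm /=; tauto.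
have := A1 hr v => /=.
have va : forall i : 'I_(ar o), v i = a i by move=> i; rewrite /v valK.
have vb : forall i : 'I_(ar o), v (ar o + i) = b i.
  move=> i; rewrite /v insubF; last by rewrite ltnNge leq_addr.
  by rewrite addKn valK.
have E1 : (fun i : 'I_(ar o) => eval v (Tm (Var i) (Var (ar o + i)))) = a.
  apply: functional_extensionality => i; rewrite evalTm /= va vb; by case: (h i).
have E2 : (fun i : 'I_(ar o) => eval v (Tm (Var (ar o + i)) (Var i))) = b.
  apply: functional_extensionality => i; rewrite evalTm /= va vb; by case: (h i).
by rewrite E1 E2.
Qed.

Lemma th_cong : congruence th.
Proof.
split.
- exact: th_refl.
- by move=> x y [].
- exact: th_trans.
- exact: th_compat.
Qed.

Lemma th_closed a : Defs.closed (th a).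
Proof.
move=> o args h.
have hr : regular (Var 0) (@App _ ar o (fun _ => Var 0)).
  move=> m /=; split; first by move=> ->; exists (Ordinal (Hnonullary o)).
  by case.
have := A1 hr (fun _ => a) => /= h1.
apply: th_trans h1 _; apply: th_compat => i.
case: (h i) => h2 h3; by split.
Qed.

Lemma th_eval a v r : (forall n, th a (v n)) -> th a (eval v r).
Proof.
move=> hv; elim: r => [n|o args IH] /=; first exact: hv.
exact: th_closed.
Qed.

Lemma A_quot : Svar (quotient th).
Proof.
move=> s u hr V; apply: sig_eq; rewrite !eval_quot; try exact: th_cong.
apply: cong_eq; first exact: th_cong.
exact: A1.
Qed.

Lemma A_class a : Vt (subalg (@th_closed a)).
Proof.
apply/hSigV => s u hsu w; apply: sig_eq; rewrite !eval_sub.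
pose v := fun n => proj1_sig (w n).
have hv : forall n, th a (v n) := fun n => proj2_sig (w n).
have := hA (I2 hsu) v; rewrite !eval_subst.
have E : (fun n => eval v (sgQ s u n)) = v.
  apply: functional_extensionality => n; rewrite /sgQ evalTm /=.
  have : th (v n) (eval v (Tm s u)).
    apply: th_trans (th_eval (Tm s u) hv); case: (hv n) => h1 h2; by split.
  by case.
by rewrite E.
Qed.

End ASide.

Lemma main_var SigW : (forall A, W A <-> Mod SigW A) ->
  forall A, K A <-> Mod Sigma A.
Proof.
move=> hW A; split; first by move=> hK s u hs; exact: hs A hK.
move=> hA; split.
  apply/hW => s u hs v; apply: (hA s u) => B hB; exact: (proj1 (hW B) (proj1 hB)) s u hs.
exists (@th A); split.
- exact: th_cong.
- exact: A_quot.
- move=> a; exists (@th_closed A hA a); exact: A_class.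
Qed.

End Main.

Theorem corollary5p5 (Op : Type) (ar : Op -> nat)
  (Hnonullary : forall o : Op, 0 < ar o)
  (Hplural : exists o : Op, 2 <= ar o)
  (Vt W : algclass ar) :
  is_variety Vt ->
  (exists t : term ar, in_T2 t /\ forall A, Vt A -> satisfies A t (Var 0)) ->
  is_variety W ->
  is_variety (malcev_rel Vt W).
Proof.
move=> [SigV hSigV] [t [ht HVt]] [SigW hSigW].
exists (Sigma Vt W).
exact: (main_var ht hSigV HVt Hnonullary hSigW).
Qed.
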